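(* Let $(V,\cdot)$ be a nondegenerate intersection pairing of odd type that is not positive definite. Then there exists $v\in V$ such that $v\cdot v<0$ and $v\cdot v$ is odd.
   Context: An intersection pairing is a finitely generated free abelian group $V$ with a symmetric bilinear form $V\times V\to\mathbf{Z}$, $(u,w)\mapsto u\cdot w$; nondegenerate means the adjoint $V\to\mathrm{Hom}(V,\mathbf{Z})$ has nonzero determinant. It has odd type if $w\cdot w$ is odd for some $w\in V$. Positive definite means $u\cdot u>0$ for all $u\neq 0$. *)

(* Defs.v *)
(* An intersection pairing on V = Z^n (a finitely generated
   free abelian group, identified with row vectors 'rV[int]_n via a basis)
   is given by its Gram matrix A, required to be symmetric. *)
From mathcomp Require Import all_boot all_order all_algebra.
Set Implicit Arguments. Unset Strict Implicit. Unset Printing Implicit Defensive.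
Import Order.TTheory GRing.Theory Num.Theory.
Local Open Scope ring_scope.

Definition ipair (n : nat) (A : 'M[int]_n) (u w : 'rV[int]_n) : int :=
  (u *m A *m w^T) 0 0.

Definition gram_symmetric (n : nat) (A : 'M[int]_n) : Prop := A^T = A.

(* nondegenerate: the adjoint V -> Hom(V,Z) has nonzero determinant *)
Definition ipair_nondeg (n : nat) (A : 'M[int]_n) : Prop := \det A != 0.

Definition oddz (x : int) : bool := ~~ (2%:Z %| x)%Z.

Definition ipair_odd_type (n : nat) (A : 'M[int]_n) : Prop :=
  exists w : 'rV[int]_n, oddz (ipair A w w).

Definition ipair_pos_def (n : nat) (A : 'M[int]_n) : Prop :=
  forall u : 'rV[int]_n, u != 0 -> 0 < ipair A u u.

(* Main.v *)
Require Import Defs.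
From mathcomp Require Import all_boot all_order all_algebra.
From mathcomp Require Import zify ring.
From Stdlib Require Import Classical_Prop.
Import Order.TTheory GRing.Theory Num.Theory.
Local Open Scope ring_scope.

Section Aux.
Variables (n : nat) (A : 'M[int]_n).

Lemma ipairDr u v w : ipair A u (v + w) = ipair A u v + ipair A u w.
Proof. by rewrite /ipair linearD /= mulmxDr mxE. Qed.
Lemma ipairZr a u v : ipair A u (a *: v) = a * ipair A u v.
Proof. by rewrite /ipair linearZ /= -scalemxAr mxE. Qed.
Lemma ipairDl u v w : ipair A (v + w) u = ipair A v u + ipair A w u.
Proof. by rewrite /ipair !mulmxDl mxE. Qed.
Lemma ipairZl a u v : ipair A (a *: v) u = a * ipair A v u.
Proof. by rewrite /ipair -!scalemxAl mxE. Qed.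
Lemma ipairC u w : gram_symmetric A -> ipair A w u = ipair A u w.
Proof.
move=> hs; rewrite /ipair.
have -> : u *m A *m w^T = (w *m A *m u^T)^T.
  by rewrite !trmx_mul trmxK (hs : A^T = A) mulmxA.
by rewrite [in RHS]mxE.
Qed.

Lemma ipair_exp a u w : gram_symmetric A ->
  ipair A (a *: u + w) (a *: u + w) =
  a * a * ipair A u u + 2 * a * ipair A u w + ipair A w w.
Proof.
move=> hs; rewrite !ipairDl !ipairDr !ipairZl !ipairZr (ipairC u w hs).
ring.
Qed.
End Aux.

Lemma arith1 (q c a b: int) : (2 %| q)%Z -> ~~ (2 %| c)%Z ->
  ~~ (2 %| a*a*q + 2*a*b + c)%Z.
Proof. move=> h1 h2. lia. Qed.
Lemma arith2 (q c b k: int) : q <= 0 -> b != 0 -> k = `|c| + 1 ->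
  (-b*k)*(-b*k)*q + 2*(-b*k)*b + c < 0.
Proof. move=> h1 h2 h3. have hb: 1 <= b*b by nia.
have : (-b*k)*(-b*k)*q <= 0 by nia. nia. Qed.
Lemma arith3 (q c z: int) : ~~ (2 %| c)%Z -> ~~ (2 %| 2*2*q + 2*2*z + c)%Z.
Proof. move=> h; lia. Qed.
Lemma arith4 (q : int) : q <= 0 -> ~~ (2 %| q)%Z -> q < 0.
Proof. move=> h1 h2; lia. Qed.

Theorem mainTheorem5 (n : nat) (A : 'M[int]_n) :
  gram_symmetric A -> ipair_nondeg A -> ipair_odd_type A -> ~ ipair_pos_def A ->
  exists v : 'rV[int]_n, ipair A v v < 0 /\ oddz (ipair A v v).
Proof.
move=> hs hnd [w hw] hnp.
have [u [hu0 hu]] : exists u : 'rV[int]_n, u != 0 /\ ipair A u u <= 0.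
  apply: NNPP => hne; apply: hnp => u hu.
  rewrite ltNge; apply/negP => hle; apply: hne; by exists u.
case: (boolP (oddz (ipair A u u))) => hodd.
  by exists u; split => //; apply: arith4.
have hev : (2 %| ipair A u u)%Z by move: hodd; rewrite /oddz negbK.
have [w' [hw' hb]] : exists w' : 'rV[int]_n,
    oddz (ipair A w' w') /\ ipair A u w' != 0.
  case: (eqVneq (ipair A u w) 0) => hbw; last by exists w.
  have huA : u *m A != 0.
    apply/negP => /eqP h0.
    have : u *m A *m \adj A = 0 by rewrite h0 mul0mx.
    rewrite -mulmxA mul_mx_adj mul_mx_scalar => /eqP.
    move/eqP/matrixP => h; move/negP: hu0; apply; apply/eqP/matrixP => i k.
    move: (h i k); rewrite !mxE => /eqP; rewrite mulf_eq0 (negbTE hnd) /=.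
    by move/eqP.
  have [j hj] : exists j, (u *m A) 0 j != 0.
    apply: NNPP => hne; move/negP: huA; apply; apply/eqP/matrixP => i k.
    rewrite (ord1 i) [RHS]mxE; apply: NNPP => hk; apply: hne; exists k; exact/eqP.
  pose z : 'rV[int]_n := delta_mx 0 j.
  have hz : ipair A u z = (u *m A) 0 j.
    by rewrite /ipair /z trmx_delta -colE mxE.
  exists (2 *: z + w); split.
    rewrite ipair_exp //; exact: arith3.
  rewrite ipairDr ipairZr hz hbw addr0 mulf_eq0 negb_or hj andbT //.
set b := ipair A u w'.
set c := ipair A w' w'.
exists ((- b * (`|c| + 1)) *: u + w').
rewrite ipair_exp //; split.
  exact: arith2.
exact: arith1.
Qed.
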